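(* Let $(x_n)_n$ and $(y_n)_n$ be bounded sequences in a Banach space $X$. (a) If $\sum_n\|x_n-y_n\|<\infty$, then $\{x_n\}_n$ is a Banach-Saks set if and only if $\{y_n\}_n$ is a Banach-Saks set. (b) $\mathrm{conv}(\{x_n\}_n)$ is a Banach-Saks set if and only if every block sequence in $\mathrm{conv}(\{x_n\}_n)$ has the Banach-Saks property (i.e. forms a Banach-Saks set).
   Context: A subset $A$ of a Banach space is a Banach-Saks set if every sequence in $A$ has a subsequence $(z_n)_n$ whose Ces\`aro means $\frac1n\sum_{k=1}^n z_k$ converge in norm. A block sequence in $\mathrm{conv}(\{x_n\}_n)$ is a sequence $(z_m)_m$ with $z_m=\sum_{k\in F_m}\lambda^{(m)}_k x_k$, where each $(\lambda^{(m)}_k)_{k\in F_m}$ is a convex combination and $F_1<F_2<\cdots$ are finite subsets of $\mathbb N$ ($F<G$ means $\max F<\min G$). *)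

(* Defs.v *)
(* real Banach space = completeNormedModType over R : realType *)
From HB Require Import structures.
From mathcomp Require Import all_boot all_order all_algebra.
From mathcomp Require Import all_classical all_reals all_analysis.
Set Implicit Arguments. Unset Strict Implicit. Unset Printing Implicit Defensive.
Import Order.TTheory GRing.Theory Num.Theory.
Import numFieldNormedType.Exports.
Local Open Scope classical_set_scope.
Local Open Scope ring_scope.

Section BS.
Variables (R : realType) (X : normedModType R).

Definition cesaro (z : nat -> X) (n : nat) : X :=
  (n.+1%:R)^-1 *: \sum_(k < n.+1) z k.

Definition banach_saks_set (A : set X) : Prop :=
  forall u : nat -> X, (forall n, A (u n)) ->
    exists phi : nat -> nat, (forall n, (phi n < phi n.+1)%N) /\
      exists l : X, cesaro (u \o phi) @ \oo --> l.

Definition bounded_seq (x : nat -> X) : Prop :=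
  exists M : R, forall n, `|x n| <= M.

Definition conv_seq (x : nat -> X) : set X :=
  [set z | exists (N : nat) (lam : nat -> R),
     [/\ forall k, 0 <= lam k, \sum_(k < N) lam k = 1
       & z = \sum_(k < N) lam k *: x k]].

Definition block_seq (x : nat -> X) (z : nat -> X) : Prop :=
  exists (F : nat -> seq nat) (lam : nat -> nat -> R),
    forall m,
    [/\ uniq (F m),
        forall k, k \in F m -> 0 <= lam m k,
        \sum_(k <- F m) lam m k = 1,
        z m = \sum_(k <- F m) lam m k *: x k
      & forall i j, i \in F m -> j \in F m.+1 -> (i < j)%N].

End BS.

(* Main.v *)
From Pilot Require Import Defs.
From HB Require Import structures.
From mathcomp Require Import all_boot all_order all_algebra.
From mathcomp Require Import all_classical all_reals all_analysis.
From mathcomp Require Import lra.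
Import Order.TTheory GRing.Theory Num.Theory.
Import numFieldNormedType.Exports.
Local Open Scope classical_set_scope.
Local Open Scope ring_scope.
Set Implicit Arguments. Unset Strict Implicit.


Notation ces := Pilot.Defs.cesaro.
Section basics.
Variables (R : realType) (X : normedModType R).
Implicit Types (u v : nat -> X).

Lemma cesaroD u v n : ces (fun k : nat => u k + v k) n = ces u n + ces v n.
Proof. by rewrite /ces /Defs.cesaro big_split /= scalerDr. Qed.

Lemma cesaroZ (c : R) u n : ces (fun k : nat => c *: u k) n = c *: ces u n.
Proof. by rewrite /ces /Defs.cesaro -scaler_sumr !scalerA mulrC. Qed.

Lemma cesaro_cst (l : X) n : ces (fun=> l) n = l.
Proof.
rewrite /ces /Defs.cesaro sumr_const card_ord -[l *+ _]scaler_nat scalerA.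
by rewrite mulVf ?scale1r// pnatr_eq0.
Qed.

Lemma cesaro_cvg u (l : X) : u @ \oo --> l -> ces u @ \oo --> l.
Proof.
move=> ul; apply/subr_cvg0.
have E n : ces u n - l = ces (fun k : nat => u k - l) n.
  rewrite (cesaroD u (fun=> - l)); congr (_ + _).
  by rewrite cesaro_cst.
apply: norm_cvg0.
have h0 : (fun k : nat => `|u k - l|) @ \oo --> (0 : R).
  by apply/norm_cvg0P; apply/subr_cvg0.
have := cesaro h0.
apply: (@squeeze_cvgr _ _ _ _ (fun=> 0)); last exact: cvg_cst.
near=> n; rewrite normr_ge0 /= E /Defs.cesaro /arithmetic_mean /= /series /=.
rewrite normrZ ger0_norm ?invr_ge0// ler_wpM2l ?invr_ge0//.
by rewrite big_mkord ler_norm_sum.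
Unshelve. all: end_near. Qed.

End basics.

Section seqs.

Lemma incr_mono (phi : nat -> nat) : (forall n, (phi n < phi n.+1)%N) ->
  forall m n, (m < n)%N -> (phi m < phi n)%N.
Proof. move=> h; exact: (@homo_ltn nat phi (fun a b => (a < b)%N) (fun y x z => @ltn_trans y x z) h). Qed.

Lemma incr_ge (phi : nat -> nat) : (forall n, (phi n < phi n.+1)%N) ->
  forall n, (n <= phi n)%N.
Proof.
move=> h; elim=> [|n IH] //; exact: leq_ltn_trans IH (h n).
Qed.

Lemma incr_cvg (phi : nat -> nat) : (forall n, (phi n < phi n.+1)%N) ->
  phi @ \oo --> \oo.
Proof.
move=> h; apply/cvgnyPge => A; near=> n.
have := incr_ge h n; apply: leq_trans; near: n; exact: nbhs_infty_ge.
Unshelve. all: end_near. Qed.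

Lemma incr_comp (phi psi : nat -> nat) : (forall n, (phi n < phi n.+1)%N) ->
  (forall n, (psi n < psi n.+1)%N) -> forall n, ((phi \o psi) n < (phi \o psi) n.+1)%N.
Proof. by move=> h1 h2 n; exact: (incr_mono h1 (h2 n)). Qed.

Lemma freq_subseq (P : nat -> Prop) : (forall N, exists n, (N <= n)%N /\ P n) ->
  exists phi : nat -> nat, (forall n, (phi n < phi n.+1)%N) /\ forall n, P (phi n).
Proof.
move=> /choice[g gP].
pose phi := fix phi n := if n is m.+1 then g (phi m).+1 else g 0%N.
exists phi; split => [n|[|n]] /=; last 2 first.
- exact: (gP 0%N).2.
- exact: (gP _).2.
- exact: (gP _).1.
Qed.

End seqs.

Section bs.
Variables (R : realType) (X : normedModType R).

Lemma bs_sub (A B : set X) : A `<=` B -> banach_saks_set B -> banach_saks_set A.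
Proof. by move=> AB hB u uA; apply: hB => n; apply: AB. Qed.

Lemma bs_perturb (x y : nat -> X) : (fun n => x n - y n) @ \oo --> 0 ->
  banach_saks_set (range y) -> banach_saks_set (range x).
Proof.
move=> dxy hy u ux.
have /choice[k kP] : forall n, exists m, x m = u n.
  by move=> n; have [m _ <-] := ux n; exists m.
have [[m fm]|nf] := pselect (exists m, forall N, exists n, (N <= n)%N /\ k n = m).
  have [phi [phiI phiP]] := freq_subseq fm.
  exists phi; split => //; exists (x m).
  have -> : ces (u \o phi) = fun=> x m.
    by apply/funext => n; rewrite -[RHS](cesaro_cst _ n); congr ces; apply/funext => j /=; rewrite -kP phiP.
  exact: cvg_cst.
have koo : k @ \oo --> \oo.
  apply/cvgnyPge; elim=> [|A IH]; first exact: nearW.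
  have : \forall n \near \oo, k n != A.
    have /existsNP[N hN] : ~ (forall N, exists n, (N <= n)%N /\ k n = A).
      by move=> H; apply: nf; exists A.
    exists N => // n /= Nn; apply/eqP => knA; apply: hN; exists n; split => //.
  move=> nA; near=> n; rewrite ltn_neqAle eq_sym.
  by apply/andP; split; [near: n; exact: nA | near: n; exact: IH].
have hd : (fun n => x (k n) - y (k n)) @ \oo --> 0.
  exact: (cvg_comp _ _ koo dxy).
have [phi [phiI [l hl]]] := hy (fun n => y (k n)) (fun n => ex_intro2 _ _ (k n) I erefl).
exists phi; split => //; exists (l + 0).
have -> : ces (u \o phi) = fun n => ces ((fun n => y (k n)) \o phi) n +
    ces ((fun n => x (k n) - y (k n)) \o phi) n.
  apply/funext => n; rewrite -cesaroD; congr ces; apply/funext => j /=.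
  by rewrite -kP addrC subrK.
apply: cvgD => //; apply: cesaro_cvg.
exact: (cvg_comp _ _ (incr_cvg phiI) hd).
Unshelve. all: end_near. Qed.

End bs.


Section cluster.
Import ArrowAsProduct.
Variable R : realType.

Lemma cluster_seq (L : nat -> nat -> R) : (forall n k, 0 <= L n k <= 1) ->
  exists mu : nat -> R, (forall k, 0 <= mu k <= 1) /\
   forall p (d : R), 0 < d -> forall N0, exists n, (N0 <= n)%N /\
     forall k, (k < p)%N -> `|L n k - mu k| < d.
Proof.
move=> L01.
have cK : compact [set f : nat -> R | forall i, `[0, 1]%classic (f i)].
  exact: (@tychonoff nat (fun=> R) (fun=> `[0, 1]%classic) (fun=> @segment_compact R 0 1)).
have FK : (L @ \oo) [set f : nat -> R | forall i, `[0, 1]%classic (f i)].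
  by exists 0%N => // n _ i; rewrite /= in_itv /=; exact: L01.
have [mu [Kmu clmu]] := cK (L @ \oo) (fmap_proper_filter _ _) FK; exists mu; split.
  by move=> k; have := Kmu k; rewrite /= in_itv /= => /andP[-> ->].
move=> p d d0 N0.
pose PT := prod_topology (fun _ : nat => R).
have hB : nbhs (mu : PT) [set f : PT | forall k, (k < p)%N -> `|f k - mu k| < d].
  elim: p => [|p IH]; first by apply: filterE => f k; rewrite ltn0.
  have := @proj_continuous nat (fun=> R) p mu; move/cvgrPdist_lt => /(_ d d0) hp.
  apply: (filterS2 _ _ IH hp) => f h1 h2 k.
  rewrite ltnS leq_eqVlt => /orP[/eqP->|kp]; last exact: h1.
  by rewrite distrC.
have FA : (L @ \oo) (L @` [set n | (N0 <= n)%N]).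
  by exists N0 => // n /= Nn; exists n.
have [f [[n /= Nn <-] Bf]] := clmu _ _ FA hB.
by exists n.
Unshelve. all: end_near. Qed.

End cluster.


Section sums.
Variables (R : realType) (V : normedModType R).

Lemma sum_widen_if (f : nat -> V) (q Q : nat) : (q <= Q)%N ->
  \sum_(0 <= k < Q) (if (k < q)%N then f k else 0) = \sum_(k < q) f k.
Proof.
move=> qQ; rewrite big_mkord -big_mkcond /=.
by rewrite (big_ord_widen _ _ qQ).
Qed.

Lemma sum_split (f : nat -> V) (p Q : nat) : (p <= Q)%N ->
  \sum_(0 <= k < Q) f k = \sum_(0 <= k < p) f k + \sum_(p <= k < Q) f k.
Proof. by move=> pQ; rewrite (@big_cat_nat _ _ _ p 0 Q) //. Qed.

End sums.



Section hard.
Variables (R : realType) (X : completeNormedModType R).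

Lemma hard_constr (x : nat -> X) (M : R) (u : nat -> X) :
  (forall n, `|x n| <= M) -> (forall n, conv_seq x (u n)) ->
  exists nn : nat -> nat, (forall j, (nn j < nn j.+1)%N) /\
    exists (c b : nat -> X) (a : X) (t : R),
      [/\ c @ \oo --> a, block_seq x b & forall j, u (nn j) = c j + t *: b j].
Proof.
move=> hM uc.
have M0 : 0 <= M := le_trans (normr_ge0 _) (hM 0%N).
have /choice[NL hNL] : forall n, exists NL : nat * (nat -> R),
    [/\ forall k, 0 <= NL.2 k, \sum_(k < NL.1) NL.2 k = 1
      & u n = \sum_(k < NL.1) NL.2 k *: x k].
  by move=> n; have [N [lam [h1 h2 h3]]] := uc n; exists (N, lam).
pose N n := (NL n).1.
pose Lam n k := if (k < N n)%N then (NL n).2 k else 0.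
have L0 n k : 0 <= Lam n k.
  by rewrite /Lam; case: ifP => // _; have [] := hNL n.
have Lsum n Q : (N n <= Q)%N -> \sum_(0 <= k < Q) Lam n k = 1.
  by move=> NQ; rewrite (sum_widen_if (fun k => (NL n).2 k) NQ); have [] := hNL n.
have Lvec n Q : (N n <= Q)%N -> u n = \sum_(0 <= k < Q) Lam n k *: x k.
  move=> NQ; have [_ _ ->] := hNL n.
  rewrite -(sum_widen_if (fun k => (NL n).2 k *: x k) NQ).
  by apply: eq_bigr => k _; rewrite /Lam; case: ifP => //; rewrite scale0r.
have Lpart n q : \sum_(0 <= k < q) Lam n k <= 1.
  rewrite -(Lsum n (maxn q (N n)) (leq_maxr _ _)).
  rewrite (sum_split _ (leq_maxl q (N n))) lerDl.
  by apply: sumr_ge0 => k _.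
have Lle1 n k : Lam n k <= 1.
  have := Lpart n k.+1; rewrite big_nat_recr //= => h; apply: le_trans h.
  by rewrite lerDr; apply: sumr_ge0 => i _.
have L01 n k : 0 <= Lam n k <= 1 by rewrite L0 Lle1.
have [mu [mu01 CL]] := cluster_seq L01.
have mu0 k : 0 <= mu k by have /andP[] := mu01 k.
have musum q : \sum_(0 <= k < q) mu k <= 1.
  apply/ler_addgt0Pr => e e0.
  pose d := e / q.+1%:R.
  have d0 : 0 < d by rewrite divr_gt0 // ltr0n.
  have [n [_ hn]] := CL q d d0 0%N.
  have h1 : \sum_(0 <= k < q) mu k <= \sum_(0 <= k < q) (Lam n k + d).
    rewrite big_nat_cond [X in _ <= X]big_nat_cond; apply: ler_sum => k /andP[/andP[_ kq] _].
    by have := hn k kq; rewrite ltr_distl => /andP[h _]; lra.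
  rewrite big_split /= sumr_const_nat subn0 in h1.
  apply: (le_trans h1); apply: lerD; first exact: Lpart.
  rewrite /d -[_ *+ q]mulr_natr -mulrA ler_piMr ?ltW // mulrC.
  by rewrite ?ltr_pdivrMr ?ler_pdivrMr ?ltr0n // mul1r ?ltr_nat ?ler_nat.
have muS : cvgn (series mu).
  apply: nondecreasing_is_cvgn; first exact: nondecreasing_series.
  by exists 1 => _ [n _ <-]; exact: musum.
pose s := limn (series mu).
have AS : cvgn (series (fun k => mu k *: x k)).
  apply: normed_cvg; apply: (@series_le_cvg _ _ (fun k => M * mu k)).
  - by move=> k; rewrite normr_ge0.
  - by move=> k; rewrite mulr_ge0.
  - by move=> k /=; rewrite normrZ ger0_norm // mulrC ler_wpM2r.
  - exact: is_cvg_seriesZ.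
pose a := limn (series (fun k => mu k *: x k)).
have /choice[g hg] : forall pN : nat * nat, exists n, (pN.2 <= n)%N /\
    forall k, (k < pN.1)%N -> `|Lam n k - mu k| < (pN.1.+1%:R ^+ 2)^-1.
  by move=> [p N0]; apply: (CL p _ _ N0); rewrite invr_gt0 exprn_gt0 // ltr0n.
pose st := fix st j := if j is j'.+1 then
    (maxn (N (st j').2) (st j').1.+1, g (maxn (N (st j').2) (st j').1.+1, (st j').2.+1))
  else (0%N, g (0%N, 0%N)).
pose pp j := (st j).1.
pose nn j := (st j).2.
have ppS j : pp j.+1 = maxn (N (nn j)) (pp j).+1 by [].
have nnI j : (nn j < nn j.+1)%N by exact: (hg (pp j.+1, (nn j).+1)).1.
have ppI j : (pp j < pp j.+1)%N by rewrite ppS leq_max ltnSn orbT.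
have ppN j : (N (nn j) <= pp j.+1)%N by rewrite ppS leq_maxl.
have close j k : (k < pp j)%N -> `|Lam (nn j) k - mu k| < ((pp j).+1%:R ^+ 2)^-1.
  by case: j => [|j]; [exact: (hg (0%N, 0%N)).2 | exact: (hg (pp j.+1, (nn j).+1)).2].
pose D j := \sum_(0 <= k < pp j) `|Lam (nn j) k - mu k|.
have Dge0 j : 0 <= D j by apply: sumr_ge0 => k _.
have Dle j : D j <= (pp j).+1%:R^-1.
  apply: (@le_trans _ _ (\sum_(0 <= k < pp j) ((pp j).+1%:R ^+ 2)^-1)).
    rewrite /D big_nat_cond [X in _ <= X]big_nat_cond; apply: ler_sum => k /andP[/andP[_ kq] _].
    exact/ltW/close.
  rewrite sumr_const_nat subn0 -[_ *+ pp j]mulr_natr expr2 invfM -mulrA ler_piMr ?invr_ge0 //.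
  by rewrite mulrC ?ltr_pdivrMr ?ler_pdivrMr ?ltr0n // mul1r ?ltr_nat ?ler_nat.
have D0 : D @ \oo --> 0.
  apply: (@squeeze_cvgr _ _ _ _ (fun=> 0) (fun j => harmonic (pp j))).
  - by near=> j; rewrite Dge0 Dle.
  - exact: cvg_cst.
  - exact: (cvg_comp _ _ (incr_cvg ppI) cvg_harmonic).
pose head j := \sum_(0 <= k < pp j) Lam (nn j) k *: x k.
pose tail j := \sum_(pp j <= k < pp j.+1) Lam (nn j) k *: x k.
pose T j := \sum_(pp j <= k < pp j.+1) Lam (nn j) k.
pose H j := \sum_(0 <= k < pp j) Lam (nn j) k.
have uHT j : u (nn j) = head j + tail j.
  by rewrite (Lvec _ _ (ppN j)) (sum_split _ (ltnW (ppI j))).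
have THj j : T j = 1 - H j.
  by rewrite -(Lsum _ _ (ppN j)) (sum_split _ (ltnW (ppI j))) [H j + T j]addrC addrK.
have T0 j : 0 <= T j by apply: sumr_ge0 => k _.
pose b j := if T j == 0 then x (pp j) else (T j)^-1 *: tail j.
have Tb j : T j *: b j = tail j.
  rewrite /b; case: eqP => [T0j|/eqP Tn0]; last by rewrite scalerA mulfV ?scale1r.
  rewrite T0j scale0r; apply/esym/big1_seq => k /andP[_ kin].
  move/eqP: T0j; rewrite psumr_eq0 => [/allP/(_ k kin)|i _ //].
  by rewrite implyTb => /eqP ->; rewrite scale0r.
have bM j : `|b j| <= M.
  rewrite /b; case: eqP => // /eqP Tn0.
  rewrite normrZ ger0_norm ?invr_ge0 // ler_pdivrMl ?lt_def ?Tn0 ?T0 //.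
  rewrite (le_trans (ler_norm_sum _ _ _)) // /T mulr_suml.
  by apply: ler_sum => k _; rewrite normrZ ger0_norm // ler_wpM2l.
have Fin (m i : nat) : i \in (if T m == 0 then [:: pp m] else index_iota (pp m) (pp m.+1)) ->
    (pp m <= i < pp m.+1)%N.
  case: eqP => _; last by rewrite mem_index_iota.
  by rewrite inE => /eqP ->; rewrite leqnn ppI.
have blk : block_seq x b.
  exists (fun j => if T j == 0 then [:: pp j] else index_iota (pp j) (pp j.+1)).
  exists (fun j k => if T j == 0 then 1 else Lam (nn j) k / T j).
  move=> m; split.
  - by case: eqP => _ //; exact: iota_uniq.
  - by move=> k _; case: eqP => _ //; rewrite divr_ge0.
  - case: eqP => [_|/eqP Tz]; first by rewrite big_seq1.
    by rewrite -mulr_suml mulfV.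
  - rewrite /b; case: eqP => [_|/eqP Tz]; first by rewrite big_seq1 scale1r.
    rewrite scaler_sumr; apply: eq_bigr => k _; by rewrite scalerA mulrC.
  - move=> i i' /Fin /andP[_ hi] /Fin /andP[hi' _].
    exact: leq_trans hi hi'.
pose t := 1 - s.
pose c j := head j + (T j - t) *: b j.
exists nn; split => //; exists c, b, a, t; split => //; last first.
  by move=> j; rewrite uHT -Tb /c scalerBl -addrA subrK.
have hA : (fun j => series (fun k => mu k *: x k) (pp j)) @ \oo --> a.
  exact: (cvg_comp _ _ (incr_cvg ppI) AS).
have hS : (fun j => series mu (pp j)) @ \oo --> s.
  exact: (cvg_comp _ _ (incr_cvg ppI) muS).
have DM : (fun j => D j * M) @ \oo --> 0.
  by rewrite -(mul0r M); apply: cvgM => //; exact: cvg_cst.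
have hhead : head @ \oo --> a.
  apply: cvg_sub0 hA; apply: norm_cvg0.
  apply: (@squeeze_cvgr _ _ _ _ (fun=> 0) (fun j => D j * M)); last 2 first.
  - exact: cvg_cst.
  - exact: DM.
  near=> j; rewrite normr_ge0 /= /head /series /= !fctE -sumrB.
  rewrite (le_trans (ler_norm_sum _ _ _)) // /D mulr_suml.
  by apply: ler_sum => k _; rewrite -scalerBl normrZ ler_wpM2l.
have hH : H @ \oo --> s.
  apply: cvg_sub0 hS; apply: norm_cvg0.
  apply: (@squeeze_cvgr _ _ _ _ (fun=> 0) D); last 2 first.
  - exact: cvg_cst.
  - exact: D0.
  near=> j; rewrite normr_ge0 /= /H /series /= !fctE -sumrB.
  exact: ler_norm_sum.
have hT : T @ \oo --> t.
  rewrite (_ : T = fun j => 1 - H j); last by apply/funext => j; exact: THj.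
  by apply: cvgB => //; exact: cvg_cst.
have hTb : (fun j => (T j - t) *: b j) @ \oo --> 0.
  apply: norm_cvg0.
  have hT0 : (fun j => `|T j - t| * M) @ \oo --> 0.
    rewrite -(mul0r M); apply: cvgM; last exact: cvg_cst.
    apply/norm_cvg0P; exact/subr_cvg0.
  apply: (@squeeze_cvgr _ _ _ _ (fun=> 0) (fun j => `|T j - t| * M)); last 2 first.
  - exact: cvg_cst.
  - exact: hT0.
  by near=> j; rewrite normr_ge0 /= normrZ ler_wpM2l.
rewrite -[a]addr0; exact: cvgD.
Unshelve. all: end_near. Qed.

End hard.


Section final.
Variables (R : realType) (X : completeNormedModType R).

Lemma hard (x : nat -> X) : bounded_seq x ->
  (forall z, block_seq x z -> banach_saks_set (range z)) -> banach_saks_set (conv_seq x).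
Proof.
move=> [M hM] hB u uc.
have [nn [nnI [c [b [a [t [hc blk hu]]]]]]] := hard_constr hM uc.
have [phi [phiI [l hl]]] := hB b blk b (fun n => ex_intro2 _ _ n I erefl).
exists (nn \o phi); split; first exact: incr_comp.
exists (a + t *: l).
have -> : ces (u \o (nn \o phi)) = fun n => ces (c \o phi) n + t *: ces (b \o phi) n.
  apply/funext => n; rewrite -cesaroZ -cesaroD; congr ces; apply/funext => j /=; exact: hu.
apply: cvgD; first exact: cesaro_cvg (cvg_comp _ _ (incr_cvg phiI) hc).
by apply: cvgZ => //; exact: cvg_cst.
Qed.

Lemma sum_seq_ord (f : nat -> X) (s : seq nat) (N : nat) : uniq s ->
  (forall k, k \in s -> (k < N)%N) ->
  \sum_(k < N) (if (k : nat) \in s then f k else 0) = \sum_(k <- s) f k.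
Proof.
move=> us sN; rewrite -(big_mkord xpredT (fun k : nat => if k \in s then f k else 0)) -big_mkcond -big_filter.
apply: perm_big; apply: uniq_perm => //; first by rewrite filter_uniq // iota_uniq.
by move=> k; rewrite mem_filter mem_index_iota /=; case: (boolP (k \in s)) => // /sN ->.
Qed.

Lemma sum_seq_ordR (f : nat -> R) (s : seq nat) (N : nat) : uniq s ->
  (forall k, k \in s -> (k < N)%N) ->
  \sum_(k < N) (if (k : nat) \in s then f k else 0) = \sum_(k <- s) f k.
Proof.
move=> us sN; rewrite -(big_mkord xpredT (fun k : nat => if k \in s then f k else 0)) -big_mkcond -big_filter.
apply: perm_big; apply: uniq_perm => //; first by rewrite filter_uniq // iota_uniq.
by move=> k; rewrite mem_filter mem_index_iota /=; case: (boolP (k \in s)) => // /sN ->.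
Qed.

Lemma block_conv (x z : nat -> X) : block_seq x z -> range z `<=` conv_seq x.
Proof.
move=> [F [lam hF]] _ [m _ <-]; have [Fu lam0 lam1 zm _] := hF m.
have FN k : k \in F m -> (k < (\max_(i <- F m) i).+1)%N.
  by move=> kin; rewrite ltnS (@leq_bigmax_seq _ (F m) xpredT (fun i => i) k kin).
exists (\max_(i <- F m) i).+1, (fun k => if k \in F m then lam m k else 0); split.
- by move=> k; case: ifP => // kin; exact: lam0.
- by rewrite sum_seq_ordR.
- rewrite zm -(sum_seq_ord _ Fu FN); apply: eq_bigr => k _.
  by case: ifP => //; rewrite scale0r.
Qed.

End final.

Unset Implicit Arguments.

Theorem lemma2p9 (R : realType) (X : completeNormedModType R) (x y : nat -> X) :
  bounded_seq x -> bounded_seq y ->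
  ((cvg (series (fun n => `|x n - y n|) @ \oo) ->
      (banach_saks_set (range x) <-> banach_saks_set (range y)))
   /\
   (banach_saks_set (conv_seq x) <->
      (forall z : nat -> X, block_seq x z -> banach_saks_set (range z)))).
Proof.
move=> bx _; split.
  move=> hs; have h0 := cvg_series_cvg_0 hs.
  have dxy : (fun n => x n - y n) @ \oo --> 0 by exact: norm_cvg0.
  have dyx : (fun n => y n - x n) @ \oo --> 0.
    apply: norm_cvg0; rewrite (_ : (fun n => `|y n - x n|) = fun n => `|x n - y n|) //.
    by apply/funext => n; rewrite distrC.
  by split; [exact: bs_perturb dyx | exact: bs_perturb dxy].
split; first by move=> hc z bz; exact: bs_sub (block_conv bz) hc.
exact: hard.
Qed.
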